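(* Let $(\mathcal{S},d_S)$ and $(\mathcal{T},d_T)$ be totally bounded premetric spaces, and let $\mathcal{U}(\mathcal{S},\mathcal{T})$ be the set of metric-preserving functions $f:\mathcal{S}\to\mathcal{T}$ (i.e. $d_T(f(x),f(y))=d_S(x,y)$ for all $x,y$), equipped with $d(f,g)=\sup_{x\in\mathcal{S}}d_T(f(x),g(x))$. Then $(\mathcal{U}(\mathcal{S},\mathcal{T}),d)$ is a totally bounded premetric space.
   Context: A premetric space is a set $X$ with a function $d:X\times X\to[0,\infty)$ such that $d(x,x)=0$, $d(x,y)=d(y,x)$, and $d(x,z)\le d(x,y)+d(y,z)$ for all $x,y,z$ ($d(x,y)=0$ need not imply $x=y$). The ball $B_\epsilon(x)=\{y: d(x,y)<\epsilon\}$; the space is totally bounded if for every $\epsilon>0$ finitely many balls of radius $\epsilon$ cover it. *)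

(* Defs.v *)
From HB Require Import structures.
From mathcomp Require Import all_boot all_order all_algebra.
From mathcomp Require Import all_classical all_reals.
Set Implicit Arguments. Unset Strict Implicit. Unset Printing Implicit Defensive.
Import Order.TTheory GRing.Theory Num.Theory.
Local Open Scope classical_set_scope.
Local Open Scope ring_scope.

Definition premetric (R : realType) (X : Type) (d : X -> X -> R) : Prop :=
  [/\ forall x y, 0 <= d x y,
      forall x, d x x = 0,
      forall x y, d x y = d y x &
      forall x y z, d x z <= d x y + d y z].

Definition pball (R : realType) (X : Type) (d : X -> X -> R) (x : X) (eps : R)
  : set X := [set y | d x y < eps].

Definition totally_bounded_pm (R : realType) (X : Type) (d : X -> X -> R) : Prop :=
  forall eps : R, 0 < eps ->
    exists (n : nat) (c : 'I_n -> X), forall y : X, exists i : 'I_n, pball d (c i) eps y.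

Definition metric_preserving (R : realType) (S T : Type)
  (dS : S -> S -> R) (dT : T -> T -> R) (f : S -> T) : Prop :=
  forall x y, dT (f x) (f y) = dS x y.

Definition mp_fun (R : realType) (S T : Type) (dS : S -> S -> R) (dT : T -> T -> R) :=
  {f : S -> T | metric_preserving dS dT f}.

Definition sup_dist (R : realType) (S T : Type) (dS : S -> S -> R) (dT : T -> T -> R)
  (f g : mp_fun dS dT) : R :=
  sup [set dT (proj1_sig f x) (proj1_sig g x) | x in [set: S]].
Arguments sup_dist {R S T} dS dT f g.

(* Main.v *)
Require Import Defs.
From mathcomp Require Import all_boot all_order all_algebra.
From mathcomp Require Import all_classical all_reals.
From mathcomp Require Import lra.
Set Implicit Arguments. Unset Strict Implicit. Unset Printing Implicit Defensive.
Import Order.TTheory GRing.Theory Num.Theory.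
Local Open Scope classical_set_scope.
Local Open Scope ring_scope.

Section Aux.
Variable R : realType.

Lemma sup_img_ge0 (S : Type) (F : S -> R) :
  (forall x, 0 <= F x) -> 0 <= sup [set F x | x in [set: S]].
Proof.
move=> F0; have [hs|nhs] := pselect (has_sup [set F x | x in [set: S]]).
  case: (hs) => -[y [x _ hx]] _.
  apply: le_trans (F0 x) _; apply: sup_upper_bound => //; by exists x.
by rewrite sup_out.
Qed.

Lemma sup_img_le (S : Type) (F : S -> R) M :
  (forall x, F x <= M) -> 0 <= M -> sup [set F x | x in [set: S]] <= M.
Proof.
move=> FM M0; have [hs|nhs] := pselect (has_sup [set F x | x in [set: S]]).
  apply: ge_sup; first by case: hs.
  by move=> y [x _ <-].
by rewrite sup_out.
Qed.

Lemma sup_img_ub (S : Type) (F : S -> R) B x :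
  (forall x, F x <= B) -> F x <= sup [set F x | x in [set: S]].
Proof.
move=> FB; apply: ub_le_sup; last by exists x.
by exists B => y [z _ <-].
Qed.

Lemma tb_bounded (X : Type) (d : X -> X -> R) :
  premetric d -> totally_bounded_pm d -> exists B, forall x y, d x y <= B.
Proof.
move=> [d0 dxx dC dT] /(_ 1 ltr01) [n [c hc]].
exists (2 + \sum_(i < n) \sum_(j < n) d (c i) (c j)) => x y.
have [i hi] := hc x; have [j hj] := hc y.
rewrite /pball /= in hi hj.
have h1 : d (c i) (c j) <= \sum_(i < n) \sum_(j < n) d (c i) (c j).
  rewrite (bigD1 i) //= (bigD1 j) //= -addrA lerDl addr_ge0 //.
    by apply: sumr_ge0 => k _.
  by apply: sumr_ge0 => k _; apply: sumr_ge0.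
apply: le_trans (dT x (c i) y) _.
apply: le_trans (lerD (lexx _) (dT (c i) (c j) y)) _.
rewrite dC; have -> : (2 : R) = 1 + 1 by [].
have := ltW hi; have := ltW hj; lra.
Qed.

End Aux.

Theorem mainTheorem9 (R : realType) (S T : Type)
  (dS : S -> S -> R) (dT : T -> T -> R) :
  premetric dS -> premetric dT ->
  totally_bounded_pm dS -> totally_bounded_pm dT ->
  premetric (sup_dist dS dT) /\ totally_bounded_pm (sup_dist dS dT).
Proof.
move=> pS pT tS tT.
have [BT hBT] := tb_bounded pT tT.
case: (pS) => S0 Sxx SC Str; case: (pT) => T0 Txx TC Ttr.
split.
  split.
  - by move=> f g; apply: sup_img_ge0 => x.
  - move=> f; apply/le_anti; rewrite sup_img_ge0 // andbT.
    by apply: sup_img_le => // x; rewrite Txx.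
  - move=> f g; rewrite /sup_dist; congr sup.
    by apply/seteqP; split => y [x _ <-]; exists x => //; rewrite TC.
  - move=> f g h; apply: sup_img_le => [x|]; last first.
      by apply: addr_ge0; apply: sup_img_ge0.
    apply: le_trans (Ttr _ (proj1_sig g x) _) _.
    by apply: lerD; apply: (@sup_img_ub _ _ _ BT).
move=> eps eps0.
pose del := eps / 8.
have del0 : 0 < del by rewrite /del divr_gt0.
have [n [s hs]] := tS del del0.
have [m [t ht]] := tT del del0.
have [tj htj] := choice ht.
have [si hsi] := choice (fun x => hs x).
pose code (f : mp_fun dS dT) : {ffun 'I_n -> 'I_m} :=
  [ffun i => tj (proj1_sig f (s i))].
have [f0|nf] := pselect (exists f : mp_fun dS dT, True); last first.
  have e : 'I_0 -> mp_fun dS dT by move=> i; exfalso; case: i.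
  exists 0%N, e => y.
  by exfalso; apply: nf; exists y.
case: f0 => f0 _.
have /choice [rep hrep] : forall k : {ffun 'I_n -> 'I_m},
    exists g, (exists f, code f = k) -> code g = k.
  move=> k.
  have [[f hf]|] := pselect (exists f, code f = k).
    by exists f => _.
  by move=> nk; exists f0 => hk; exfalso; apply: nk.
exists #|{ffun 'I_n -> 'I_m}|, (fun p => rep (enum_val p)) => f.
exists (enum_rank (code f)); rewrite /pball /= enum_rankK.
set g := rep (code f).
have hg : code g = code f by apply: hrep; exists f.
apply: (@le_lt_trans _ _ (4 * del)); last first.
  rewrite /del; lra.
apply: sup_img_le => [x|]; last by lra.
case: f g hg => [f fP] [g gP] /= hg.
rewrite /code in hg.
set i := si x.
have hi := hsi x; rewrite -/i /pball /= in hi.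
have hgf : tj (g (s i)) = tj (f (s i)).
  by have := congr1 (fun F : {ffun _ -> _} => F i) hg; rewrite !ffunE.
have h1 := htj (g (s i)); have h2 := htj (f (s i)).
rewrite /pball /= hgf in h1 h2.
have e1 : dT (g x) (g (s i)) = dS x (s i) by apply: gP.
have e2 : dT (f (s i)) (f x) = dS (s i) x by apply: fP.
rewrite SC in e1.
apply: le_trans (Ttr _ (g (s i)) _) _.
apply: le_trans (lerD (lexx _) (Ttr _ (f (s i)) _)) _.
apply: le_trans (lerD (lexx _) (lerD (Ttr _ (t (tj (f (s i)))) _) (lexx _))) _.
rewrite e1 e2 (TC (g (s i))).
lra.
Qed.
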